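(* Let $\epsilon\in(0,1)$, let $K\ge1$, and let $T\ge2$ be an integer. Let $\bar A=[\bar a,\bar b)\times[0,\infty)$ with integers $\bar a<\bar b$. Let $\bar{\mathcal{W}}$ be a finite set of rows of an RCP instance such that every row $W\in\bar{\mathcal{W}}$ spans $\bar A$, i.e., there exist $R,R'\in W$ with $\mathrm{left}(R)\le\bar a$ and $\mathrm{right}(R')\ge\bar b$. For a real $c'>0$ and an integer $p'$, let $\bar{\mathcal{W}}^{c',p'}$ be the set of rows $W\in\bar{\mathcal{W}}$ whose leftmost rectangle $R$ satisfies $c(R)=c'$ and $(1+\epsilon)^{p'}\le p(R)<(1+\epsilon)^{p'+1}$. Let $\mathcal{G}$ be any set of pairs $(c',p')$ containing every pair with $\bar{\mathcal{W}}^{c',p'}\neq\emptyset$. Let $\bar S\subseteq\bigcup_{W\in\bar{\mathcal{W}}}W$ contain a prefix of each row $W\in\bar{\mathcal W}$ (if $R\in\bar S\cap W$ then every $R'\in W$ with $\mathrm{right}(R')\le\mathrm{left}(R)$ is in $\bar S$), and let $\bar n^{c',p'}:=|\{W\in\bar{\mathcal{W}}^{c',p'}:W\cap\bar S\ne\emptyset\}|$. Then there exists a step function $\bar f:\bar A\to\{0,1,\dots,\sum_{R}p(R)\}$ with $O((K|\mathcal{G}|\log T/\epsilon)^2)$ steps such that for all integers $t,s$ with $(t,s)\in\bar A$, $$\bar f(t,s)\le\sum_{R\in\bar S:R\cap L(s,t)\ne\emptyset}p(R)\le\bar f(t,s)+\sum_{(c',p')}(1+\epsilon)^{p'}\left\lfloor\frac{\epsilon}{2K\log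 T}\bar n^{c',p'}\right\rfloor,$$ where the last sum ranges over all pairs $(c',p')$ for which some rectangle in some row of $\bar{\mathcal{W}}^{c',p'}$ intersects $L(s,t)$.
   Context: RCP rectangles and rows: each rectangle is $R=[a,b)\times[j,j+1)$ with $a<b$, $a,b,j\in\mathbb{N}_0$, $\mathrm{left}(R)=a$, $\mathrm{right}(R)=b$, cost $c(R)>0$ and value $p(R)>0$; rectangles are pairwise disjoint; the rectangles with the same $j$ form a row, all rectangles of a row have the same value and are consecutive along the $x$-axis (no gaps). The ray $L(s,t)$ for $s,t\in\mathbb{N}_0$ is $\{t\}\times(-\infty,s]$; a rectangle $[a,b)\times[j,j+1)$ intersects $L(s,t)$ iff $a\le t<b$ and $j\le s$. A step function on $\bar A$ with $k$ steps is a function for which there is a partition of $\bar A$ into $k$ axis-parallel rectangles of the form $[x^L,x^R)\times[y^B,y^T)$ (with $x^L,x^R,y^B\in\mathbb{N}_0$, $y^T\in\mathbb{N}_0\cup\{\infty\}$) on each of which the function is constant. The sum $\sum_R p(R)$ in the codomain is over all rectangles of the rows in $\bar{\mathcal W}$. *)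

(* Defs.v *)
From Stdlib Require Import Reals Lra Lia ZArith Arith List.
Import ListNotations.
Open Scope R_scope.

(* A rectangle [rl, rr) x [rj, rj+1) with cost rc (real) and value rp. *)
Record rect := Rect { rl : nat; rr : nat; rj : nat; rc : R; rp : nat }.

(* R intersects the ray L(s,t) = {t} x (-oo, s] *)
Definition hits (Rc : rect) (s t : nat) : bool :=
  (Nat.leb (rl Rc) t && Nat.ltb t (rr Rc) && Nat.leb (rj Rc) s)%bool.

Fixpoint consec (W : list rect) : Prop :=
  match W with
  | R1 :: ((R2 :: _) as W') => rr R1 = rl R2 /\ consec W'
  | _ => True
  end.

Definition row_j (W : list rect) : nat :=
  match W with R1 :: _ => rj R1 | [] => O end.

Definition valid_row (W : list rect) : Prop :=
  W <> [] /\ consec W /\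
  (forall Rc, In Rc W -> rj Rc = row_j W) /\
  (forall Rc Rc', In Rc W -> In Rc' W -> rp Rc = rp Rc') /\
  (forall Rc, In Rc W -> (rl Rc < rr Rc)%nat /\ 0 < rc Rc /\ (0 < rp Rc)%nat).

Definition spans (abar bbar : nat) (W : list rect) : Prop :=
  exists Rc Rc', In Rc W /\ In Rc' W /\ (rl Rc <= abar)%nat /\ (bbar <= rr Rc')%nat.

Definition in_classb (eps c' : R) (p' : Z) (W : list rect) : bool :=
  match W with
  | R1 :: _ =>
      if Req_EM_T (rc R1) c' then
        if Rle_dec (powerRZ (1 + eps) p') (INR (rp R1)) then
          if Rlt_dec (INR (rp R1)) (powerRZ (1 + eps) (p' + 1)) then true
          else false
        else false
      else false
  | [] => false
  end.

Definition nbar (eps c' : R) (p' : Z) (Wbar : list (list rect))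
  (Sbar : rect -> bool) : nat :=
  length (filter (fun W => (in_classb eps c' p' W && existsb Sbar W)%bool) Wbar).

Definition list_sumn (l : list nat) : nat := fold_right Nat.add O l.

Definition sumS (Wbar : list (list rect)) (Sbar : rect -> bool) (s t : nat) : nat :=
  list_sumn (map (fun W => list_sumn (map (fun Rc =>
     if (Sbar Rc && hits Rc s t)%bool then rp Rc else O) W)) Wbar).

Definition total (Wbar : list (list rect)) : nat :=
  list_sumn (map (fun W => list_sumn (map rp W)) Wbar).

Definition log2 (x : R) : R := ln x / ln 2.

Definition err (eps K : R) (T : nat) (Wbar : list (list rect))
  (Sbar : rect -> bool) (G : list (R * Z)) (s t : nat) : R :=
  fold_right Rplus 0 (map (fun g : R * Z =>
    let (c', p') := g in
    if existsb (fun W => (in_classb eps c' p' W && existsb (fun Rc => hits Rc s t) W)%bool) Wbar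
    then powerRZ (1 + eps) p' *
         IZR (Int_part (eps / (2 * K * log2 (INR T)) * INR (nbar eps c' p' Wbar Sbar)))
    else 0) G).

(* Axis-parallel box [xL,xR) x [yB,yT), yT = None meaning infinity. *)
Record box := Box { xL : nat; xR : nat; yB : nat; yT : option nat }.

Definition in_box (b : box) (t s : nat) : Prop :=
  (xL b <= t < xR b)%nat /\ (yB b <= s)%nat /\
  match yT b with None => True | Some y => (s < y)%nat end.

Definition in_Abar (abar bbar t s : nat) : Prop := (abar <= t < bbar)%nat.

(* f is a step function on Abar = [abar,bbar) x [0,oo) whose steps are the
   boxes: the boxes partition Abar (checked on lattice points, which is
   equivalent for boxes with integer corners) and f is constant on each. *)
Definition step_fun (abar bbar : nat) (f : nat -> nat -> nat) (bs : list box) : Prop :=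
  (forall b t s, In b bs -> in_box b t s -> in_Abar abar bbar t s) /\
  (forall t s, in_Abar abar bbar t s -> exists b, In b bs /\ in_box b t s) /\
  (forall i j t s, (i < length bs)%nat -> (j < length bs)%nat ->
     in_box (nth i bs (Box 0 0 0 None)) t s -> in_box (nth j bs (Box 0 0 0 None)) t s -> i = j) /\
  (forall b t s t' s', In b bs -> in_box b t s -> in_box b t' s' -> f t s = f t' s').

(* Main.v *)
Require Import Defs.
From Stdlib Require Import Reals ZArith Arith List Lia Lra.
Import ListNotations.
Open Scope R_scope.

Module P1.
Local Open Scope nat_scope.

Lemma filter_len_le {A} (f : A -> bool) l : length (filter f l) <= length l.
Proof. induction l; simpl; auto. destruct (f a); simpl; lia. Qed.

Lemma filter_len_mono {A} (f g : A -> bool) l :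
  (forall x, In x l -> f x = true -> g x = true) ->
  length (filter f l) <= length (filter g l).
Proof.
  induction l; simpl; intros H; auto.
  destruct (f a) eqn:E1.
  - rewrite (H a (or_introl eq_refl) E1). simpl. apply le_n_S, IHl. intros; apply H; auto.
  - destruct (g a); simpl; [apply le_S|]; apply IHl; intros; apply H; auto.
Qed.

Lemma filter_len_all {A} (f : A -> bool) l :
  (forall x, In x l -> f x = true) -> length (filter f l) = length l.
Proof.
  induction l; simpl; intros H; auto.
  rewrite (H a (or_introl eq_refl)). simpl. f_equal. apply IHl; auto.
Qed.

Lemma filter_len_compl {A} (f g : A -> bool) l :
  (forall x, f x = negb (g x)) -> length (filter f l) + length (filter g l) = length l.
Proof.
  induction l; simpl; intros H; auto.
  rewrite H. destruct (g a); simpl; rewrite <- (IHl H); lia.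
Qed.

Lemma filter_filter_sub {A} (f g : A -> bool) l :
  (forall x, f x = true -> g x = true) -> filter f (filter g l) = filter f l.
Proof.
  induction l; simpl; intros H; auto.
  destruct (g a) eqn:E; simpl.
  - destruct (f a); rewrite IHl; auto.
  - destruct (f a) eqn:E2; [rewrite (H a E2) in E; discriminate|]. auto.
Qed.

Lemma list_max_ge l x : In x l -> x <= list_max l.
Proof. induction l; simpl; intros H; [contradiction|]. destruct H; subst; lia || (specialize (IHl H); lia). Qed.

Lemma list_max_in l : l <> [] -> In (list_max l) l.
Proof.
  induction l; simpl; intros H; [congruence|].
  destruct l as [|b l].
  - simpl. left; lia.
  - assert (In (list_max (b::l)) (b::l)) by (apply IHl; congruence).
    destruct (Nat.max_spec a (list_max (b::l))) as [[_ E]|[_ E]]; rewrite E; auto.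
Qed.

Definition inopen (lo hi x : nat) : bool := (lo <? x) && (x <? hi).

Lemma find_c (L : list nat) m : forall N,
  m < length (filter (fun x => x <=? N) L) ->
  exists c, m < length (filter (fun x => x <=? c) L) /\
            length (filter (fun x => x <? c) L) <= m.
Proof.
  induction N; intros H.
  - exists 0. split; auto.
    assert (E : filter (fun x => x <? 0) L = []) by (clear; induction L; simpl; auto).
    rewrite E; simpl; lia.
  - destruct (Nat.lt_ge_cases m (length (filter (fun x => x <=? N) L))) as [H1|H1].
    + apply IHN; auto.
    + exists (S N). split; [exact H|exact H1].
Qed.

Lemma cut_exists m : forall L, exists cuts : list nat,
  S m * length cuts <= length L /\
  forall lo hi, (forall c, In c cuts -> ~ (lo < c < hi)) ->
    length (filter (inopen lo hi) L) <= m.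
Proof.
  intros L. remember (length L) as n. revert L Heqn.
  induction n as [n IH] using (well_founded_induction lt_wf).
  intros L Hn.
  destruct (Nat.le_gt_cases n m) as [Hle|Hgt].
  - exists []. split; [simpl; lia|]. intros. pose proof (filter_len_le (inopen lo hi) L). lia.
  - destruct (find_c L m (list_max L)) as [c [Hc1 Hc2]].
    { rewrite filter_len_all; [lia|]. intros x Hx. apply Nat.leb_le, list_max_ge; auto. }
    set (L' := filter (fun x => c <? x) L).
    assert (HL' : length L' + length (filter (fun x => x <=? c) L) = length L).
    { apply filter_len_compl. intros x. destruct (Nat.leb_spec x c); destruct (Nat.ltb_spec c x); simpl; auto; lia. }
    destruct (IH (length L') ltac:(lia) L' eq_refl) as [cuts' [H1 H2]].
    exists (c :: cuts'). split; [simpl; lia|].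
    intros lo hi Hno.
    destruct (Nat.le_gt_cases hi c) as [Hhc|Hhc].
    + etransitivity; [|exact Hc2]. apply filter_len_mono. intros x _ Hx.
      unfold inopen in Hx. apply andb_prop in Hx as [_ Hx]. apply Nat.ltb_lt in Hx. apply Nat.ltb_lt. lia.
    + destruct (Nat.le_gt_cases c lo) as [Hcl|Hcl].
      * rewrite <- (filter_filter_sub (inopen lo hi) (fun x => c <? x)).
        { apply H2. intros c0 Hc0. apply Hno. right; auto. }
        intros x Hx. unfold inopen in Hx. apply andb_prop in Hx as [Hx _]. apply Nat.ltb_lt in Hx. apply Nat.ltb_lt. lia.
      * exfalso. apply (Hno c); [left; auto|lia].
Qed.

End P1.
Import P1.

Module P2.
Local Open Scope nat_scope.

Fixpoint upf (P : nat -> bool) (u n : nat) : nat :=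
  match n with 0 => u | S n' => if P u then u else upf P (S u) n' end.

Lemma upf_spec P n : forall u,
  u <= upf P u n <= u + n /\ (forall w, u <= w < upf P u n -> P w = false) /\
  (upf P u n = u + n \/ P (upf P u n) = true).
Proof.
  induction n; intros u; simpl.
  - split; [lia|]. split; [intros; lia|]. left; lia.
  - destruct (P u) eqn:E.
    + split; [lia|]. split; [intros; lia|]. right; auto.
    + destruct (IHn (S u)) as [H1 [H2 H3]]. split; [lia|]. split.
      * intros w Hw. destruct (Nat.eq_dec w u); [subst; auto|]. apply H2; lia.
      * destruct H3; [left; lia|right; auto].
Qed.

Lemma upf_unique P n u v :
  u <= v <= u + n -> (forall w, u <= w < v -> P w = false) ->
  (v = u + n \/ P v = true) -> upf P u n = v.
Proof.
  intros H1 H2 H3. destruct (upf_spec P n u) as [G1 [G2 G3]].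
  destruct (Nat.lt_total (upf P u n) v) as [L|[L|L]]; auto.
  - exfalso. destruct G3 as [G3|G3]; [lia|]. rewrite H2 in G3; [discriminate|lia].
  - exfalso. destruct H3 as [H3|H3]; [lia|]. rewrite G2 in H3; [discriminate|lia].
Qed.

Fixpoint lo (P : nat -> bool) (t : nat) : nat :=
  match t with 0 => 0 | S t' => if P (S t') then S t' else lo P t' end.

Lemma lo_spec P t :
  lo P t <= t /\ (forall w, lo P t < w <= t -> P w = false) /\
  (lo P t = 0 \/ P (lo P t) = true).
Proof.
  induction t; simpl.
  - split; [lia|]. split; [intros; lia|]. left; auto.
  - destruct (P (S t)) eqn:E.
    + split; [lia|]. split; [intros; lia|]. right; auto.
    + destruct IHt as [H1 [H2 H3]]. split; [lia|]. split; auto.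
      intros w Hw. destruct (Nat.eq_dec w (S t)); [subst; auto|]. apply H2; lia.
Qed.

Lemma lo_unique P t v :
  v <= t -> P v = true -> (forall w, v < w <= t -> P w = false) -> lo P t = v.
Proof.
  intros H1 H2 H3. destruct (lo_spec P t) as [G1 [G2 G3]].
  destruct (Nat.lt_total (lo P t) v) as [L|[L|L]]; auto.
  - exfalso. rewrite G2 in H2; [discriminate|lia].
  - exfalso. destruct G3 as [G3|G3]; [lia|]. rewrite H3 in G3; [discriminate|lia].
Qed.

End P2.
Import P2.

Module P3.
Local Open Scope bool_scope.
Local Open Scope nat_scope.

Lemma consec_tail a l : consec (a :: l) -> consec l.
Proof. destruct l; simpl; tauto. Qed.

Definition posrect (W : list rect) := forall R, In R W -> rl R < rr R.

Lemma consec_after W : forall R1, consec (R1 :: W) -> posrect (R1 :: W) ->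
  forall R, In R W -> rr R1 <= rl R.
Proof.
  induction W as [|R2 W IH]; intros R1 Hc Hp R HR; [contradiction|].
  simpl in Hc. destruct Hc as [E Hc].
  destruct HR as [HR|HR]; [subst; lia|].
  assert (rr R2 <= rl R) by (apply (IH R2); auto; intros x Hx; apply Hp; right; auto).
  assert (rl R2 < rr R2) by (apply Hp; right; left; auto). lia.
Qed.

Lemma consec_pair W : consec W -> posrect W ->
  forall R R', In R W -> In R' W -> R = R' \/ rr R <= rl R' \/ rr R' <= rl R.
Proof.
  induction W as [|R1 W IH]; intros Hc Hp R R' HR HR'; [contradiction|].
  assert (Hp' : posrect W) by (intros x Hx; apply Hp; right; auto).
  pose proof (consec_after W R1 Hc Hp) as Ha.
  destruct HR as [HR|HR], HR' as [HR'|HR']; subst.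
  - left; auto.
  - right; left; apply Ha; auto.
  - right; right; apply Ha; auto.
  - apply IH; auto. eapply consec_tail; eauto.
Qed.

Lemma consec_cover W : consec W -> posrect W -> forall Ra Rb t,
  In Ra W -> In Rb W -> rl Ra <= t < rr Rb -> exists R, In R W /\ rl R <= t < rr R.
Proof.
  induction W as [|R1 W IH]; intros Hc Hp Ra Rb t Ha Hb Ht; [contradiction|].
  pose proof (consec_after W R1 Hc Hp) as Haf.
  assert (H1 : rl R1 < rr R1) by (apply Hp; left; auto).
  destruct (Nat.lt_ge_cases t (rr R1)) as [Lt|Ge].
  - exists R1. split; [left; auto|]. split; [|auto].
    destruct Ha as [Ha|Ha]; [subst; lia|]. specialize (Haf Ra Ha). lia.
  - destruct W as [|R2 W'].
    + destruct Hb as [Hb|Hb]; [subst; lia|contradiction].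
    + simpl in Hc. destruct Hc as [E Hc'].
      destruct (IH Hc' (fun x Hx => Hp x (or_intror Hx)) R2 Rb t) as [R [HR HR']].
      * left; auto.
      * destruct Hb as [Hb|Hb]; [subst; lia|auto].
      * lia.
      * exists R; split; [right; auto|auto].
Qed.

Definition cov (R : rect) (t : nat) : bool := (rl R <=? t) && (t <? rr R).

Lemma filter_nil {A} (f : A -> bool) l : (forall x, In x l -> f x = false) -> filter f l = [].
Proof. induction l; simpl; intros H; auto. rewrite H; [|left; auto]. apply IHl; auto. Qed.

Lemma cov_count (Sb : rect -> bool) W t : consec W -> posrect W ->
  length (filter (fun R => Sb R && cov R t) W) <= 1.
Proof.
  destruct W as [|R1 W]; intros Hc Hp; simpl; [lia|].
  pose proof (consec_after W R1 Hc Hp) as Haf.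
  destruct (Sb R1 && cov R1 t) eqn:E.
  - rewrite filter_nil; [simpl; lia|].
    intros x Hx. apply andb_prop in E as [_ E]. unfold cov in *.
    apply andb_prop in E as [_ E]. apply Nat.ltb_lt in E. specialize (Haf x Hx).
    destruct (Sb x); simpl; auto. destruct (Nat.leb_spec (rl x) t); simpl; auto; lia.
  -
    remember (filter (fun R => Sb R && cov R t) W) as F.
    destruct F as [|A [|B F]]; simpl; try lia.
    exfalso.
    assert (HA : In A W /\ Sb A && cov A t = true) by (apply (proj1 (filter_In (fun R => Sb R && cov R t) A W)); rewrite <- HeqF; left; auto).
    assert (HB : In B W /\ Sb B && cov B t = true) by (apply (proj1 (filter_In (fun R => Sb R && cov R t) B W)); rewrite <- HeqF; right; left; auto).
    assert (Hnd : NoDup (A :: B :: F)).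
    { rewrite HeqF. apply NoDup_filter.
      clear -Hc Hp. revert R1 Hc Hp. induction W as [|R2 W IH]; intros R1 Hc Hp; constructor.
      - intros Hin. pose proof (consec_after W R2 (consec_tail _ _ Hc) (fun x Hx => Hp x (or_intror Hx)) R2 Hin).
        assert (rl R2 < rr R2) by (apply Hp; right; left; auto). lia.
      - apply (IH R2). eapply consec_tail; eauto. intros x Hx; apply Hp; right; auto. }
    assert (A <> B) by (inversion Hnd; subst; intros E'; subst; apply H1; left; auto).
    destruct HA as [HA HA'], HB as [HB HB'].
    destruct (consec_pair W (consec_tail _ _ Hc) (fun x Hx => Hp x (or_intror Hx)) A B HA HB) as [E'|[E'|E']]; [congruence| |];
    unfold cov in *; apply andb_prop in HA' as [_ HA']; apply andb_prop in HB' as [_ HB'];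
    apply andb_prop in HA' as [Ha1 Ha2]; apply andb_prop in HB' as [Hb1 Hb2];
    apply Nat.leb_le in Ha1; apply Nat.leb_le in Hb1; apply Nat.ltb_lt in Ha2; apply Nat.ltb_lt in Hb2; lia.
Qed.

Definition rowsum (Sb : rect -> bool) (W : list rect) (s t : nat) : nat :=
  list_sumn (map (fun Rc => if (Sb Rc && hits Rc s t)%bool then rp Rc else O) W).
Definition eW (Sb : rect -> bool) (W : list rect) : nat := list_max (map rr (filter Sb W)).
Definition pw (W : list rect) : nat := match W with R1 :: _ => rp R1 | [] => 0 end.

Lemma sumn_ext_in {A} (f g : A -> nat) l : (forall x, In x l -> f x = g x) ->
  list_sumn (map f l) = list_sumn (map g l).
Proof. intros H. f_equal. apply map_ext_in. auto. Qed.

Lemma sum_const_filter {A} (f : A -> bool) c l :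
  list_sumn (map (fun x => if f x then c else 0) l) = c * length (filter f l).
Proof. induction l; simpl; [lia|]. destruct (f a); simpl; rewrite IHl; lia. Qed.

Lemma list_max_ge' l x : In x l -> x <= list_max l.
Proof. induction l; simpl; intros H; [contradiction|]. destruct H; subst; lia || (specialize (IHl H); lia). Qed.

Lemma list_max_in' l : l <> [] -> In (list_max l) l.
Proof.
  induction l; simpl; intros H; [congruence|].
  destruct l as [|b l].
  - simpl. left; lia.
  - assert (In (list_max (b::l)) (b::l)) by (apply IHl; congruence).
    destruct (Nat.max_spec a (list_max (b::l))) as [[_ E]|[_ E]]; rewrite E; auto.
Qed.

Lemma cov_exists Sb W abar bbar t :
  valid_row W -> spans abar bbar W ->
  (forall R R', In R W -> In R' W -> Sb R = true -> rr R' <= rl R -> Sb R' = true) ->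
  abar <= t < bbar -> t < eW Sb W ->
  exists R, In R W /\ Sb R && cov R t = true.
Proof.
  intros [Hne [Hc [Hj [Hp Hpos]]]] [Ra [Rb [HRa [HRb [Ha Hb]]]]] Hpre Ht Hlt.
  assert (Hpr : posrect W) by (intros R HR; apply Hpos; auto).
  unfold eW in Hlt.
  assert (Hnn : map rr (filter Sb W) <> []).
  { intros E. rewrite E in Hlt. simpl in Hlt. lia. }
  apply list_max_in' in Hnn. apply in_map_iff in Hnn as [R0 [E0 HR0]].
  apply filter_In in HR0 as [HR0 HS0].
  destruct (consec_cover W Hc Hpr Ra Rb t HRa HRb ltac:(lia)) as [R' [HR' Hcov]].
  exists R'. split; auto.
  assert (Sb R' = true).
  { destruct (consec_pair W Hc Hpr R' R0 HR' HR0) as [E|[E|E]].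
    - subst; auto.
    - apply (Hpre R0 R'); auto.
    - lia. }
  rewrite H. unfold cov. simpl. apply andb_true_intro; split; [apply Nat.leb_le|apply Nat.ltb_lt]; lia.
Qed.

Lemma rowsum_formula Sb W abar bbar s t :
  valid_row W -> spans abar bbar W ->
  (forall R R', In R W -> In R' W -> Sb R = true -> rr R' <= rl R -> Sb R' = true) ->
  abar <= t < bbar ->
  rowsum Sb W s t = if (row_j W <=? s) && (t <? eW Sb W) then pw W else 0.
Proof.
  intros Hv Hsp Hpre Ht.
  pose proof Hv as [Hne [Hc [Hj [Hp Hpos]]]].
  assert (Hpr : posrect W) by (intros R HR; apply Hpos; auto).
  unfold rowsum.
  rewrite (sumn_ext_in _ (fun R => if (row_j W <=? s) && (Sb R && cov R t) then pw W else 0)).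
  2:{ intros R HR. unfold hits, cov. rewrite (Hj R HR).
      assert (rp R = pw W) by (destruct W as [|R1 W']; [congruence|]; simpl; apply Hp; auto; left; auto).
      rewrite H. destruct (Sb R), (rl R <=? t), (t <? rr R), (row_j W <=? s); reflexivity. }
  rewrite sum_const_filter.
  destruct (row_j W <=? s); simpl.
  2:{ rewrite filter_nil; simpl; auto. }
  destruct (Nat.ltb_spec t (eW Sb W)) as [L|L].
  - destruct (cov_exists Sb W abar bbar t Hv Hsp Hpre Ht L) as [R [HR HR']].
    pose proof (cov_count Sb W t Hc Hpr).
    assert (In R (filter (fun R => Sb R && cov R t) W)) by (apply filter_In; auto).
    destruct (filter (fun R => Sb R && cov R t) W) as [|x [|y l]]; simpl in *; try contradiction; lia.
  - rewrite filter_nil; simpl; [lia|].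
    intros R HR. destruct (Sb R) eqn:ES; simpl; auto.
    unfold cov. destruct (Nat.leb_spec (rl R) t); simpl; auto.
    destruct (Nat.ltb_spec t (rr R)); auto.
    exfalso. assert (rr R <= eW Sb W); [|lia].
    apply list_max_ge'. apply in_map. apply filter_In; auto.
Qed.

Lemma rowsum_le_total Sb W s t : rowsum Sb W s t <= list_sumn (map rp W).
Proof. unfold rowsum. induction W; simpl; auto. destruct (Sb a && hits a s t); lia. Qed.

Lemma rowsum_nohit Sb W s t : existsb (fun Rc => hits Rc s t) W = false -> rowsum Sb W s t = 0.
Proof.
  unfold rowsum. induction W; simpl; auto. intros H. apply Bool.orb_false_iff in H as [H1 H2].
  rewrite H1, Bool.andb_false_r. simpl. auto.
Qed.

Lemma rowsum_noS Sb W s t : existsb Sb W = false -> rowsum Sb W s t = 0.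
Proof.
  unfold rowsum. induction W; simpl; auto. intros H. apply Bool.orb_false_iff in H as [H1 H2].
  rewrite H1. simpl. auto.
Qed.

End P3.
Import P3.

Module P4.

Lemma class_exists eps v : 0 < eps -> (1 <= v)%nat ->
  exists p', powerRZ (1+eps) p' <= INR v < powerRZ (1+eps) (p'+1).
Proof.
  intros He Hv.
  assert (Hb : 1 < 1 + eps) by lra.
  assert (Hlb : 0 < ln (1+eps)) by (rewrite <- ln_1; apply ln_increasing; lra).
  assert (HvR : 1 <= INR v) by (apply (le_INR 1); auto).
  set (x := ln (INR v) / ln (1+eps)).
  destruct (base_Int_part x) as [H1 H2].
  exists (Int_part x).
  rewrite !powerRZ_Rpower by lra. unfold Rpower. rewrite plus_IZR.
  assert (Hx : x * ln (1+eps) = ln (INR v)) by (unfold x; field; lra).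
  split.
  - rewrite <- (exp_ln (INR v)) by lra.
    destruct (Req_dec (IZR (Int_part x)) x) as [E|E].
    + rewrite E, Hx. lra.
    + left. apply exp_increasing. rewrite <- Hx. apply Rmult_lt_compat_r; lra.
  - rewrite <- (exp_ln (INR v)) by lra. apply exp_increasing. rewrite <- Hx.
    apply Rmult_lt_compat_r; lra.
Qed.

Lemma row_has_class eps W : 0 < eps -> valid_row W ->
  exists c' p', in_classb eps c' p' W = true.
Proof.
  intros He [Hne [_ [_ [_ Hpos]]]].
  destruct W as [|R1 W']; [congruence|].
  destruct (Hpos R1 (or_introl eq_refl)) as [_ [_ Hp]].
  destruct (class_exists eps (rp R1) He Hp) as [p' [H1 H2]].
  exists (rc R1), p'. simpl.
  destruct (Req_EM_T (rc R1) (rc R1)); [|congruence].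
  destruct (Rle_dec (powerRZ (1 + eps) p') (INR (rp R1))); [|contradiction].
  destruct (Rlt_dec (INR (rp R1)) (powerRZ (1 + eps) (p' + 1))); [|contradiction]. auto.
Qed.

Lemma class_val eps c' p' W : 0 < eps < 1 -> in_classb eps c' p' W = true ->
  INR (match W with R1 :: _ => rp R1 | [] => O end) <= 2 * powerRZ (1+eps) p'.
Proof.
  intros He H. destruct W as [|R1 W']; [discriminate|]. simpl in H.
  destruct (Req_EM_T (rc R1) c'); [|discriminate].
  destruct (Rle_dec (powerRZ (1 + eps) p') (INR (rp R1))) as [r0|]; [|discriminate].
  destruct (Rlt_dec (INR (rp R1)) (powerRZ (1 + eps) (p' + 1))) as [r1|]; [|discriminate].
  rewrite powerRZ_add in r1 by lra. simpl in r1.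
  pose proof (powerRZ_lt (1+eps) p' ltac:(lra)). nra.
Qed.

End P4.
Import P4.

Module P5.
Local Open Scope bool_scope.
Local Open Scope nat_scope.

Lemma sumn_le {A} (f g : A -> nat) l : (forall x, In x l -> f x <= g x) ->
  list_sumn (map f l) <= list_sumn (map g l).
Proof. induction l; simpl; intros H; auto. pose proof (H a (or_introl eq_refl)). pose proof (IHl (fun x Hx => H x (or_intror Hx))). lia. Qed.

Lemma sumn_split {A} (f g : A -> nat) l : (forall x, In x l -> f x <= g x) ->
  list_sumn (map g l) = list_sumn (map f l) + list_sumn (map (fun x => g x - f x) l).
Proof. induction l; simpl; intros H; auto. pose proof (H a (or_introl eq_refl)). rewrite (IHl (fun x Hx => H x (or_intror Hx))). lia. Qed.

Lemma sumn_zero {A} (f : A -> nat) l : (forall x, In x l -> f x = 0) -> list_sumn (map f l) = 0.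
Proof. induction l; simpl; intros H; auto. rewrite H, IHl; auto. Qed.

Lemma sumn_filter_if {A} (P : A -> bool) (f : A -> nat) l :
  list_sumn (map f (filter P l)) = list_sumn (map (fun x => if P x then f x else 0) l).
Proof. induction l; simpl; auto. destruct (P a); simpl; lia. Qed.

Lemma sumn_plus {A} (f g : A -> nat) l :
  list_sumn (map (fun x => f x + g x) l) = list_sumn (map f l) + list_sumn (map g l).
Proof. induction l; simpl; auto. lia. Qed.

Lemma sum_by_class {A B} (P : B -> A -> bool) (d : A -> nat) (G : list B) (l : list A) :
  (forall x, In x l -> exists g, In g G /\ P g x = true) ->
  list_sumn (map d l) <= list_sumn (map (fun g => list_sumn (map d (filter (P g) l))) G).
Proof.
  induction l as [|x l IH]; intros H; simpl.
  - lia.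
  - assert (E : list_sumn (map (fun g => list_sumn (map d (if P g x then x :: filter (P g) l else filter (P g) l))) G)
            = list_sumn (map (fun g => (if P g x then d x else 0) + list_sumn (map d (filter (P g) l))) G)).
    { f_equal. apply map_ext. intros g. destruct (P g x); simpl; lia. }
    rewrite E, sumn_plus.
    assert (d x <= list_sumn (map (fun g => if P g x then d x else 0) G)).
    { destruct (H x (or_introl eq_refl)) as [g [Hg Hp]]. clear -Hg Hp.
      induction G; simpl; [contradiction|]. destruct Hg; subst.
      - rewrite Hp. lia.
      - specialize (IHG H). lia. }
    pose proof (IH (fun y Hy => H y (or_intror Hy))). lia.
Qed.

Lemma filter_or_len {A} (P X Y : A -> bool) l :
  length (filter (fun x => P x && (X x || Y x)) l) <=
  length (filter (fun x => P x && X x) l) + length (filter (fun x => P x && Y x) l).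
Proof. induction l; simpl; auto. destruct (P a), (X a), (Y a); simpl; lia. Qed.

Lemma filter_map_len {A} (f : nat -> bool) (g : A -> nat) l :
  length (filter f (map g l)) = length (filter (fun x => f (g x)) l).
Proof. induction l; simpl; auto. destruct (f (g a)); simpl; lia. Qed.

Lemma filter_filter' {A} (f g : A -> bool) l :
  filter f (filter g l) = filter (fun x => g x && f x) l.
Proof. induction l; simpl; auto. destruct (g a) eqn:E1, (f a) eqn:E2; simpl; rewrite ?E2, ?IHl; auto. Qed.

Lemma existsb_false_in {A} (f : A -> bool) l x : existsb f l = false -> In x l -> f x = false.
Proof. induction l; simpl; intros H Hx; [contradiction|]. apply Bool.orb_false_iff in H as [H1 H2].
  destruct Hx; subst; auto. Qed.

Lemma Forall2_exists {A B} (P : A -> B -> Prop) (G : list A) :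
  (forall g, exists c, P g c) -> exists CL, Forall2 P G CL.
Proof.
  intros H. induction G as [|g G IH].
  - exists []. constructor.
  - destruct IH as [CL HCL]. destruct (H g) as [c Hc]. exists (c :: CL). constructor; auto.
Qed.

Lemma Forall2_in {A B} (P : A -> B -> Prop) G CL g :
  Forall2 P G CL -> In g G -> exists c, In c CL /\ P g c.
Proof.
  induction 1; intros Hg; [contradiction|]. destruct Hg as [Hg|Hg]; [subst; exists y; split; auto; left; auto|].
  destruct (IHForall2 Hg) as [c [Hc Hc']]. exists c; split; auto; right; auto.
Qed.

Lemma NoDup_map_inj {A B} (g : A -> B) l : NoDup l -> (forall x y, g x = g y -> x = y) -> NoDup (map g l).
Proof.
  induction 1; intros Hi; simpl; constructor; auto.
  intros Hin. apply in_map_iff in Hin as [y [Hy Hy']]. apply Hi in Hy. subst. contradiction.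
Qed.

Lemma NoDup_flat_map' {A B} (f : A -> list B) l : NoDup l ->
  (forall x, In x l -> NoDup (f x)) ->
  (forall x y z, In x l -> In y l -> x <> y -> In z (f x) -> ~ In z (f y)) ->
  NoDup (flat_map f l).
Proof.
  induction 1 as [|x l Hx Hl IH]; intros H1 H2; simpl; [constructor|].
  apply NoDup_app.
  - apply H1; left; auto.
  - apply IH; [intros; apply H1; right; auto|intros x0 y z Hx0 Hy Hne Hz; apply (H2 x0 y z); auto; right; auto].
  - intros z Hz Hz'. apply in_flat_map in Hz' as [y [Hy Hz']].
    apply (H2 x y z); auto; [left; auto|right; auto|intros E; subst; contradiction].
Qed.

End P5.
Import P5.

Module P6.
Local Open Scope bool_scope.
Local Open Scope nat_scope.

Definition Pset (a : nat) (cuts : list nat) (t : nat) : bool := Nat.eqb t a || existsb (Nat.eqb t) cuts.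
Definition hixf abar bbar cutsX t := upf (Pset abar cutsX) (S t) (bbar - S t).
Definition ytopn cutsY := S (list_max cutsY).
Definition hiyf cutsY s := upf (Pset 0 cutsY) (S s) (ytopn cutsY - S s).
Definition yTopf cutsY c := if hiyf cutsY c <? ytopn cutsY then Some (hiyf cutsY c) else None.
Definition xsf abar bbar cutsX := filter (Pset abar cutsX) (seq abar (bbar - abar)).
Definition ysf cutsY := filter (Pset 0 cutsY) (seq 0 (ytopn cutsY)).
Definition gridboxes abar bbar cutsX cutsY :=
  flat_map (fun a => map (fun c => Box a (hixf abar bbar cutsX a) c (yTopf cutsY c)) (ysf cutsY))
    (xsf abar bbar cutsX).

Lemma Pset_iff a cuts t : Pset a cuts t = true <-> t = a \/ In t cuts.
Proof.
  unfold Pset. rewrite Bool.orb_true_iff, Nat.eqb_eq, existsb_exists. split.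
  - intros [H|[x [Hx Hx']]]; auto. apply Nat.eqb_eq in Hx'. subst; auto.
  - intros [H|H]; auto. right. exists t. split; auto. apply Nat.eqb_refl.
Qed.

Lemma Py_high cutsY w : ytopn cutsY <= w -> Pset 0 cutsY w = false.
Proof.
  intros H. destruct (Pset 0 cutsY w) eqn:E; auto. apply Pset_iff in E as [E|E].
  - unfold ytopn in H. lia.
  - apply list_max_ge in E. unfold ytopn in H. lia.
Qed.

Section Grid.
Variables (abar bbar : nat) (cutsX cutsY : list nat).
Hypothesis Hab : abar < bbar.
Local Notation Px := (Pset abar cutsX).
Local Notation Py := (Pset 0 cutsY).
Local Notation hix := (hixf abar bbar cutsX).
Local Notation yTop := (yTopf cutsY).
Local Notation bs := (gridboxes abar bbar cutsX cutsY).

Lemma hix_spec t : t < bbar -> t < hix t <= bbar /\ (forall w, t < w < hix t -> Px w = false) /\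
   (hix t = bbar \/ Px (hix t) = true).
Proof.
  intros Ht. unfold hixf. destruct (upf_spec Px (bbar - S t) (S t)) as [H1 [H2 H3]].
  split; [lia|]. split; [intros w Hw; apply H2; lia|]. destruct H3; [left; lia|right; auto].
Qed.

Lemma hix_const a t : a < bbar -> a <= t < hix a -> hix t = hix a.
Proof.
  intros Ha Ht. destruct (hix_spec a Ha) as [H1 [H2 H3]].
  unfold hixf at 1. apply upf_unique.
  - lia.
  - intros w Hw. apply H2. lia.
  - destruct H3; [left; lia|right; auto].
Qed.

Lemma in_xs a : In a (xsf abar bbar cutsX) <-> abar <= a < bbar /\ Px a = true.
Proof. unfold xsf. rewrite filter_In, in_seq. split; intros [H1 H2]; split; auto; lia. Qed.

Lemma in_ys c : In c (ysf cutsY) <-> c < ytopn cutsY /\ Py c = true.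
Proof. unfold ysf. rewrite filter_In, in_seq. split; intros [H1 H2]; split; auto; lia. Qed.

Lemma in_bs b : In b bs <-> exists a c, In a (xsf abar bbar cutsX) /\ In c (ysf cutsY) /\
   b = Box a (hix a) c (yTop c).
Proof.
  unfold gridboxes. rewrite in_flat_map. split.
  - intros [a [Ha Hb]]. apply in_map_iff in Hb as [c [Hc Hc']]. exists a, c. auto.
  - intros [a [c [Ha [Hc Hb]]]]. exists a. split; auto. apply in_map_iff. exists c. auto.
Qed.

Lemma box_point b t s : In b bs -> in_box b t s ->
  exists a c, b = Box a (hix a) c (yTop c) /\ lo Px t = a /\ lo Py s = c /\ hix t = hix a /\
    abar <= a <= t /\ t < hix a <= bbar.
Proof.
  intros Hb Hin. apply in_bs in Hb as [a [c [Ha [Hc E]]]]. subst b.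
  apply in_xs in Ha as [Ha1 Ha2]. apply in_ys in Hc as [Hc1 Hc2].
  destruct Hin as [[Hx1 Hx2] [Hy1 Hy2]]. simpl in *.
  destruct (hix_spec a ltac:(lia)) as [H1 [H2 H3]].
  exists a, c. split; auto. split; [|split; [|split]].
  - apply lo_unique; auto. intros w Hw. apply H2. lia.
  - apply lo_unique; auto. intros w Hw.
    unfold yTopf, hiyf in Hy2.
    destruct (upf_spec Py (ytopn cutsY - S c) (S c)) as [G1 [G2 G3]].
    destruct (Nat.lt_ge_cases w (upf Py (S c) (ytopn cutsY - S c))) as [L|L].
    + apply G2. lia.
    + revert Hy2. destruct (Nat.ltb_spec (upf (Pset 0 cutsY) (S c) (ytopn cutsY - S c)) (ytopn cutsY)) as [L2|L2]; intros Hy2.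
      * exfalso. lia.
      * apply Py_high. lia.
  - apply hix_const; lia.
  - lia.
Qed.

Lemma grid_step (F : nat -> nat -> nat) :
  step_fun abar bbar (fun t s => F (hix t) (lo Py s)) bs.
Proof.
  split; [|split; [|split]].
  - intros b t s Hb Hin. destruct (box_point b t s Hb Hin) as [a [c [_ [_ [_ [_ [H1 H2]]]]]]].
    unfold in_Abar. lia.
  - intros t s Ht. unfold in_Abar in Ht.
    destruct (lo_spec Px t) as [A1 [A2 A3]]. destruct (lo_spec Py s) as [C1 [C2 C3]].
    remember (lo Px t) as a eqn:Ea. remember (lo Py s) as c eqn:Ec.
    assert (HPa : Px abar = true) by (apply Pset_iff; auto).
    assert (Haa : abar <= a).
    { destruct (Nat.lt_ge_cases a abar); auto. rewrite A2 in HPa; [discriminate|]. lia. }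
    assert (HPa' : Px a = true).
    { destruct A3 as [A3|A3]; auto. assert (Eab : a = abar) by lia. rewrite Eab; auto. }
    assert (HPc : Py c = true).
    { destruct C3 as [C3|C3]; auto. rewrite C3. apply Pset_iff. auto. }
    assert (Hcy : c < ytopn cutsY).
    { destruct (Nat.lt_ge_cases c (ytopn cutsY)); auto. rewrite Py_high in HPc; [discriminate|auto]. }
    exists (Box a (hix a) c (yTop c)). split.
    + apply in_bs. exists a, c. split; [apply in_xs; split; auto; lia|split; auto].
      apply in_ys; auto.
    + destruct (hix_spec a ltac:(lia)) as [H1 [H2 H3]].
      assert (t < hix a).
      { destruct (Nat.lt_ge_cases t (hix a)); auto. exfalso. destruct H3 as [H3|H3]; [lia|].
        rewrite A2 in H3; [discriminate|]. lia. }
      unfold in_box; simpl. split; [lia|]. split; [lia|].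
      unfold yTopf, hiyf.
      destruct (upf_spec Py (ytopn cutsY - S c) (S c)) as [G1 [G2 G3]].
      destruct (Nat.ltb_spec (upf (Pset 0 cutsY) (S c) (ytopn cutsY - S c)) (ytopn cutsY)) as [L2|L2]; auto.
      destruct (Nat.lt_ge_cases s (upf Py (S c) (ytopn cutsY - S c))) as [L|L]; [auto|].
      exfalso. destruct G3 as [G3|G3]; [lia|].
      rewrite C2 in G3; [discriminate|]. lia.
  - intros i j t s Hi Hj Hbi Hbj.
    assert (HND : NoDup bs).
    { unfold gridboxes. apply NoDup_flat_map'.
      - unfold xsf. apply NoDup_filter, seq_NoDup.
      - intros x _. apply NoDup_map_inj; [unfold ysf; apply NoDup_filter, seq_NoDup|].
        intros y z E. inversion E; auto.
      - intros x y z _ _ Hne Hz Hz'. apply in_map_iff in Hz as [c [Hc _]]. apply in_map_iff in Hz' as [c' [Hc' _]].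
        subst. inversion Hc'. congruence. }
    destruct (box_point _ t s (nth_In bs (Box 0 0 0 None) Hi) Hbi) as [a [c [E1 [L1 [L2 _]]]]].
    destruct (box_point _ t s (nth_In bs (Box 0 0 0 None) Hj) Hbj) as [a' [c' [E1' [L1' [L2' _]]]]].
    apply (proj1 (NoDup_nth bs (Box 0 0 0 None)) HND i j Hi Hj). congruence.
  - intros b t s t' s' Hb H1 H2.
    destruct (box_point b t s Hb H1) as [a [c [E1 [L1 [L2 [L3 _]]]]]].
    destruct (box_point b t' s' Hb H2) as [a' [c' [E1' [L1' [L2' [L3' _]]]]]].
    rewrite E1 in E1'. inversion E1'. subst. congruence.
Qed.

Lemma grid_len : length bs <= S (length cutsX) * S (length cutsY).
Proof.
  unfold gridboxes. rewrite (flat_map_constant_length (c:=length (ysf cutsY))).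
  2:{ intros; apply length_map. }
  apply Nat.mul_le_mono.
  - change (S (length cutsX)) with (length (abar :: cutsX)). apply NoDup_incl_length.
    + unfold xsf. apply NoDup_filter, seq_NoDup.
    + intros x Hx. apply in_xs in Hx as [_ Hx]. apply Pset_iff in Hx as [Hx|Hx]; [left; auto|right; auto].
  - change (S (length cutsY)) with (length (0 :: cutsY)). apply NoDup_incl_length.
    + unfold ysf. apply NoDup_filter, seq_NoDup.
    + intros x Hx. apply in_ys in Hx as [_ Hx]. apply Pset_iff in Hx as [Hx|Hx]; [left; auto|right; auto].
Qed.

Lemma grid_point t s : in_Abar abar bbar t s ->
  t < hix t <= bbar /\ lo Py s <= s /\ (forall c, In c cutsX -> ~ (t < c < hix t)) /\
  (forall c, In c cutsY -> ~ (lo Py s < c <= s)).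
Proof.
  intros Ht. unfold in_Abar in Ht. destruct (hix_spec t ltac:(lia)) as [H1 [H2 _]].
  destruct (lo_spec Py s) as [C1 [C2 _]].
  split; auto. split; auto. split.
  - intros c Hc Hc'. assert (Px c = true) by (apply Pset_iff; auto). rewrite H2 in H; [discriminate|auto].
  - intros c Hc Hc'. assert (Py c = true) by (apply Pset_iff; auto). rewrite C2 in H; [discriminate|auto].
Qed.

End Grid.

End P6.
Import P6.

Module P7.

Lemma sum_INR_le {B} (h : B -> nat) (term : B -> R) G :
  (forall g, In g G -> INR (h g) <= term g) ->
  INR (list_sumn (map h G)) <= fold_right Rplus 0 (map term G).
Proof.
  induction G; simpl; intros H; [lra|]. rewrite plus_INR.
  pose proof (H a (or_introl eq_refl)). pose proof (IHG (fun x Hx => H x (or_intror Hx))). lra.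
Qed.

Lemma sum_if_INR {A} (f : A -> bool) (h : A -> nat) (c : R) l :
  (forall x, In x l -> f x = true -> INR (h x) <= c) ->
  INR (list_sumn (map (fun x => if f x then h x else O) l)) <= c * INR (length (filter f l)).
Proof.
  induction l; cbn -[INR]; intros H; [simpl; lra|].
  pose proof (IHl (fun x Hx => H x (or_intror Hx))).
  destruct (f a) eqn:E; cbn -[INR]; rewrite ?plus_INR.
  - pose proof (H a (or_introl eq_refl) E). rewrite S_INR. unfold list_sumn in *. lra.
  - unfold list_sumn in *. simpl. lra.
Qed.

Lemma Forall2_len_bound {A} (P : A -> list nat * list nat -> Prop) (dl b : R) G CL :
  (forall g cc, P g cc -> dl * INR (length (fst cc)) <= b /\ dl * INR (length (snd cc)) <= b) ->
  Forall2 P G CL ->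
  dl * INR (length (concat (map fst CL))) <= b * INR (length G) /\
  dl * INR (length (concat (map snd CL))) <= b * INR (length G).
Proof.
  intros Hb. induction 1; cbn -[INR]; [simpl; lra|].
  rewrite !length_app, !plus_INR, S_INR. destruct (Hb _ _ H). destruct IHForall2. lra.
Qed.

End P7.
Import P7.

Theorem lemma19 :
  exists C : R, 0 < C /\
  forall (eps K : R) (T abar bbar : nat) (Wbar : list (list rect))
         (G : list (R * Z)) (Sbar : rect -> bool),
    0 < eps < 1 -> 1 <= K -> (2 <= T)%nat -> (abar < bbar)%nat ->
    (forall W, In W Wbar -> valid_row W) ->
    NoDup (map row_j Wbar) ->
    (forall W, In W Wbar -> spans abar bbar W) ->
    NoDup G ->
    (forall c' p' W, In W Wbar -> in_classb eps c' p' W = true -> In (c', p') G) ->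
    (forall Rc, Sbar Rc = true -> exists W, In W Wbar /\ In Rc W) ->
    (forall W Rc Rc', In W Wbar -> In Rc W -> In Rc' W ->
        Sbar Rc = true -> (rr Rc' <= rl Rc)%nat -> Sbar Rc' = true) ->
    exists (f : nat -> nat -> nat) (bs : list box),
      step_fun abar bbar f bs /\
      INR (length bs) <= C * (1 + (K * INR (length G) * log2 (INR T) / eps) ^ 2) /\
      (forall t s, (f t s <= total Wbar)%nat) /\
      (forall t s, in_Abar abar bbar t s ->
         INR (f t s) <= INR (sumS Wbar Sbar s t) /\
         INR (sumS Wbar Sbar s t) <= INR (f t s) + err eps K T Wbar Sbar G s t).
Proof.
  exists 128. split; [lra|].
  intros eps K T abar bbar Wbar G Sbar Heps HK HT Hab Hvalid Hnd Hspan HndG HG HS Hpre.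
  assert (HlT : 0 < log2 (INR T)).
  { unfold log2. apply Rdiv_lt_0_compat; rewrite <- ln_1; apply ln_increasing; try lra.
    apply (lt_INR 1); lia. }
  pose (dl := eps / (2 * K * log2 (INR T))).
  assert (Hdl : 0 < dl).
  { unfold dl. apply Rdiv_lt_0_compat; [lra|]. apply Rmult_lt_0_compat; lra. }
  pose (cls := fun g : R * Z => filter (fun W => (in_classb eps (fst g) (snd g) W && existsb Sbar W)%bool) Wbar).
  pose (kk := fun g => Z.to_nat (Int_part (dl * INR (length (cls g))))).
  pose (mm := fun g => (kk g / 4)%nat).
  pose (CP := fun g (cc : list nat * list nat) =>
    (S (mm g) * length (fst cc) <= length (cls g))%nat /\
    (S (mm g) * length (snd cc) <= length (cls g))%nat /\
    (forall lo hi, (forall c, In c (fst cc) -> ~ (lo < c < hi)%nat) ->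
       (length (filter (inopen lo hi) (map (eW Sbar) (cls g))) <= mm g)%nat) /\
    (forall lo hi, (forall c, In c (snd cc) -> ~ (lo < c < hi)%nat) ->
       (length (filter (inopen lo hi) (map row_j (cls g))) <= mm g)%nat)).
  assert (HCP : forall g, exists cc, CP g cc).
  { intros g. destruct (cut_exists (mm g) (map (eW Sbar) (cls g))) as [cx [Hx1 Hx2]].
    destruct (cut_exists (mm g) (map row_j (cls g))) as [cy [Hy1 Hy2]].
    rewrite length_map in Hx1, Hy1. exists (cx, cy). unfold CP; simpl; auto. }
  destruct (Forall2_exists CP G HCP) as [CL HCL].
  set (cutsX := concat (map fst CL)). set (cutsY := concat (map snd CL)).
  assert (Hkk : forall g, IZR (Int_part (dl * INR (length (cls g)))) = INR (kk g) /\
                          dl * INR (length (cls g)) < INR (kk g) + 1).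
  { intros g. set (x := dl * INR (length (cls g))).
    assert (Hx : 0 <= x) by (unfold x; apply Rmult_le_pos; [lra|apply pos_INR]).
    destruct (base_Int_part x) as [B1 B2].
    assert (Hz : (0 <= Int_part x)%Z).
    { assert (-1 < IZR (Int_part x)) by lra. apply lt_IZR in H. lia. }
    assert (E : IZR (Int_part x) = INR (kk g)).
    { unfold kk. fold x. rewrite INR_IZR_INZ, Z2Nat.id; auto. }
    split; auto. lra. }
  assert (Hper : forall g cc, CP g cc -> dl * INR (length (fst cc)) <= 4 /\ dl * INR (length (snd cc)) <= 4).
  { intros g cc [H1 [H2 _]].
    destruct (Hkk g) as [_ Hk].
    assert (Hm : (S (kk g) <= 4 * S (mm g))%nat).
    { unfold mm. pose proof (Nat.div_mod (kk g) 4 ltac:(lia)). pose proof (Nat.mod_upper_bound (kk g) 4 ltac:(lia)). lia. }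
    apply le_INR in Hm. rewrite mult_INR in Hm.
    replace (INR (S (kk g))) with (INR (kk g) + 1) in Hm by (rewrite S_INR; auto).
    replace (INR 4) with 4 in Hm by (simpl; lra).
    assert (Hmpos : 0 < INR (S (mm g))) by (apply (lt_INR 0); lia).
    apply le_INR in H1. apply le_INR in H2. rewrite mult_INR in H1, H2.
    set (n := INR (length (cls g))) in *. set (M := INR (S (mm g))) in *.
    split; apply Rmult_le_reg_r with M; auto; nra. }
  destruct (Forall2_len_bound CP dl 4 G CL Hper HCL) as [HLX HLY].
  fold cutsX cutsY in HLX, HLY.
  exists (fun t s => sumS Wbar Sbar (lo (Pset 0 cutsY) s) (pred (hixf abar bbar cutsX t))).
  exists (gridboxes abar bbar cutsX cutsY).
  split; [|split; [|split]].
  - exact (grid_step abar bbar cutsX cutsY Hab (fun h l => sumS Wbar Sbar l (pred h))).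
  - eapply Rle_trans; [apply le_INR, grid_len; auto|].
    rewrite mult_INR, !S_INR.
    set (X := INR (length cutsX)) in *. set (Y := INR (length cutsY)) in *.
    set (g := INR (length G)) in *. set (L := log2 (INR T)) in *.
    assert (HX0 : 0 <= X) by apply pos_INR. assert (HY0 : 0 <= Y) by apply pos_INR.
    assert (Hg0 : 0 <= g) by apply pos_INR.
    set (Q := K * g * L / eps).
    assert (HQ : Q * eps = K * g * L) by (unfold Q; field; lra).
    assert (HQ0 : 0 <= Q) by (unfold Q; apply Rmult_le_pos; [apply Rmult_le_pos; [apply Rmult_le_pos|]|]; try lra; left; apply Rinv_0_lt_compat; lra).
    assert (H2KL : 0 < 2 * K * L) by (apply Rmult_lt_0_compat; lra).
    assert (Hdle : dl * (2 * K * L) = eps) by (unfold dl; field; lra).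
    assert (HXb : X <= 8 * Q).
    { apply Rmult_le_reg_r with eps; [lra|]. rewrite Rmult_assoc, HQ.
      apply Rmult_le_reg_r with dl; auto. nra. }
    assert (HYb : Y <= 8 * Q).
    { apply Rmult_le_reg_r with eps; [lra|]. rewrite Rmult_assoc, HQ.
      apply Rmult_le_reg_r with dl; auto. nra. }
    assert ((X + 1) * (Y + 1) <= (8 * Q + 1) * (8 * Q + 1)) by (apply Rmult_le_compat; lra).
    nra.
  - intros t s. unfold sumS, total. apply P5.sumn_le. intros W _. apply (rowsum_le_total Sbar W).
  - intros t s Ht.
    destruct (grid_point abar bbar cutsX cutsY Hab t s Ht) as [Hh [Hlo [HcX HcY]]].
    unfold in_Abar in Ht.
    set (t' := pred (hixf abar bbar cutsX t)) in *. set (s' := lo (Pset 0 cutsY) s) in *.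
    assert (Ht' : (abar <= t' < bbar)%nat /\ (t <= t')%nat) by (unfold t'; lia).
    assert (Hform : forall W s0 t0, In W Wbar -> (abar <= t0 < bbar)%nat ->
      rowsum Sbar W s0 t0 = if ((row_j W <=? s0) && (t0 <? eW Sbar W))%bool then pw W else O).
    { intros W s0 t0 HW Ht0. apply (rowsum_formula Sbar W abar bbar); auto.
      intros R R' HR HR' HSR Hle. apply (Hpre W R R'); auto. }
    assert (Hmono : forall W, In W Wbar -> (rowsum Sbar W s' t' <= rowsum Sbar W s t)%nat).
    { intros W HW. rewrite (Hform W s' t' HW), (Hform W s t HW) by lia.
      destruct (Nat.leb_spec (row_j W) s'); destruct (Nat.leb_spec (row_j W) s);
      destruct (Nat.ltb_spec t (eW Sbar W)); destruct (Nat.ltb_spec t' (eW Sbar W)); simpl; lia. }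
    change (sumS Wbar Sbar s t) with (list_sumn (map (fun W => rowsum Sbar W s t) Wbar)).
    change (sumS Wbar Sbar s' t') with (list_sumn (map (fun W => rowsum Sbar W s' t') Wbar)).
    split.
    + apply le_INR. apply P5.sumn_le. auto.
    + rewrite (P5.sumn_split (fun W => rowsum Sbar W s' t') (fun W => rowsum Sbar W s t) Wbar Hmono).
      rewrite plus_INR. apply Rplus_le_compat_l.
      set (d := fun W => (rowsum Sbar W s t - rowsum Sbar W s' t')%nat).
      eapply Rle_trans.
      { apply le_INR. apply (P5.sum_by_class (fun g W => in_classb eps (fst g) (snd g) W) d G Wbar).
        intros W HW. destruct (row_has_class eps W) as [c' [p' Hc]]; auto; [lra|].
        exists (c', p'). split; auto. apply (HG c' p' W); auto. }
      unfold err. apply sum_INR_le.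
      intros [c' p'] Hg. cbv beta iota. cbn [fst snd].
      destruct (existsb _ Wbar) eqn:Ehit.
      * change (eps / (2 * K * log2 (INR T)) * INR (nbar eps c' p' Wbar Sbar))
          with (dl * INR (length (cls (c', p')))).
        destruct (Hkk (c', p')) as [Hk1 _]. rewrite Hk1.
        destruct (P5.Forall2_in CP G CL (c', p') HCL Hg) as [cc [Hcc [_ [_ [HCx HCy]]]]].
        set (u := powerRZ (1 + eps) p').
        assert (Hu : 0 < u) by (unfold u; apply powerRZ_lt; lra).
        set (chgb := fun W => (existsb Sbar W && (inopen s' (S s) (row_j W) || inopen t (S t') (eW Sbar W)))%bool).
        set (P := fun W : list rect => in_classb eps c' p' W).
        assert (Hd : forall W, In W Wbar -> (d W <= (if chgb W then pw W else O))%nat).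
        { intros W HW. unfold d, chgb.
          destruct (existsb Sbar W) eqn:ES.
          - rewrite (Hform W s' t' HW), (Hform W s t HW) by lia. unfold inopen. simpl.
            destruct (Nat.leb_spec (row_j W) s'); destruct (Nat.leb_spec (row_j W) s);
            destruct (Nat.ltb_spec t (eW Sbar W)); destruct (Nat.ltb_spec t' (eW Sbar W));
            destruct (Nat.ltb_spec s' (row_j W)); destruct (Nat.ltb_spec (row_j W) (S s));
            destruct (Nat.ltb_spec (eW Sbar W) (S t')); simpl; lia.
          - rewrite (rowsum_noS Sbar W s t ES). simpl. lia. }
        eapply Rle_trans.
        { apply le_INR. apply (P5.sumn_le d (fun W => if chgb W then pw W else O)).
          intros W HW. apply filter_In in HW as [HW _]. auto. }
        eapply Rle_trans.
        { apply (sum_if_INR chgb pw (2 * u)). intros W HW _.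
          apply filter_In in HW as [_ HW]. apply (class_val eps c' p' W); auto. }
        assert (Hcnt : (length (filter chgb (filter P Wbar)) <= 2 * mm (c', p'))%nat).
        { rewrite P5.filter_filter'.
          eapply Nat.le_trans.
          { apply (P1.filter_len_mono _ (fun W => ((P W && existsb Sbar W) &&
                (inopen s' (S s) (row_j W) || inopen t (S t') (eW Sbar W)))%bool)).
            intros W _ HW. unfold chgb in HW. destruct (P W), (existsb Sbar W); simpl in *; auto. }
          eapply Nat.le_trans; [apply P5.filter_or_len|].
          rewrite <- (P5.filter_filter' (fun W => inopen s' (S s) (row_j W))).
          rewrite <- (P5.filter_filter' (fun W => inopen t (S t') (eW Sbar W))).
          change (filter (fun W => (P W && existsb Sbar W)%bool) Wbar) with (cls (c', p')).
          rewrite <- (P5.filter_map_len (inopen s' (S s)) row_j).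
          rewrite <- (P5.filter_map_len (inopen t (S t')) (eW Sbar)).
          assert (A1 : (length (filter (inopen s' (S s)) (map row_j (cls (c', p')))) <= mm (c', p'))%nat).
          { apply HCy. intros c Hc Hc'. apply (HcY c); [|lia].
            unfold cutsY. apply in_concat. exists (snd cc). split; auto. apply in_map; auto. }
          assert (A2 : (length (filter (inopen t (S t')) (map (eW Sbar) (cls (c', p')))) <= mm (c', p'))%nat).
          { apply HCx. intros c Hc Hc'. apply (HcX c); [|unfold t' in Hc'; lia].
            unfold cutsX. apply in_concat. exists (fst cc). split; auto. apply in_map; auto. }
          lia. }
        apply le_INR in Hcnt. rewrite mult_INR in Hcnt.
        assert (Hk4 : (4 * mm (c', p') <= kk (c', p'))%nat) by (unfold mm; apply Nat.mul_div_le; lia).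
        apply le_INR in Hk4. rewrite mult_INR in Hk4.
        replace (INR 2) with 2 in Hcnt by (simpl; lra).
        replace (INR 4) with 4 in Hk4 by (simpl; lra).
        nra.
      * rewrite P5.sumn_zero; [simpl; lra|].
        intros W HW. apply filter_In in HW as [HW HP].
        pose proof (P5.existsb_false_in _ _ W Ehit HW) as E. cbv beta in E. rewrite HP in E. simpl in E.
        unfold d. rewrite (rowsum_nohit Sbar W s t E). lia.
Qed.
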